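(* Let $\underline m=(m_i)_{i\ge1}$ be a sequence of positive integers, $M_j=m_1+\dots+m_j$ ($M_0=0$), let $n\ge1$, and let $\psi:\mathbb Z_p\to\mathbb C_p^\times$ be an additive character of conductor $p^{M_{n-1}+k}$ with $1\le k\le m_n$ (so $\psi$ may be viewed as a character of $\mathbb Z/p^{M_n}$). Consider the function $F:\prod_{i=1}^n\mathbb Z/p^{m_i}\to\mathbb C_p^\times$, $F(a)=\psi(d_{n,\underline m}(a))$. For $\chi=(\chi_1,\ldots,\chi_n)\in\prod_{i=1}^n\widehat{\mathbb Z/p^{m_i}}$, the Fourier coefficient $\langle F,\chi\rangle$ is zero unless $\chi_n(a)=\psi(p^{M_{n-1}}a)$ for all $a\in\mathbb Z/p^{m_n}$, in which case $$\langle F,\chi\rangle=p^{m_n}\prod_{i=1}^{n-1}\frac{\psi(p^{M_i})-1}{\psi(p^{M_{i-1}})\overline{\chi_i}(1)-1}.$$ In particular all nonzero Fourier coefficients of $F$ have the same $p$-adic valuation.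
   Context: Digit map: for $a\in\mathbb Z/p^{m}$ let $\tilde a\in\{0,\ldots,p^{m}-1\}$ be its representative. The bijection of sets $d_{n,\underline m}:\prod_{i=1}^n\mathbb Z/p^{m_i}\to\mathbb Z/p^{M_n}$ is $(a_i)_i\mapsto\sum_{i=1}^n\tilde a_ip^{M_{i-1}}\bmod p^{M_n}$. For a finite abelian group $G$, $\widehat G$ is the group of characters $G\to\mathbb C_p^\times$, and for $f:G\to\mathbb C_p$ and $\chi\in\widehat G$, $\langle f,\chi\rangle=\sum_{g\in G}f(g)\overline{\chi}(g)$, where $\overline\chi=\chi^{-1}$. *)

(* Defs.v *)
From HB Require Import structures.
From mathcomp Require Import all_boot all_order all_algebra.
Set Implicit Arguments. Unset Strict Implicit. Unset Printing Implicit Defensive.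
Import Order.TTheory GRing.Theory Num.Theory.
Local Open Scope ring_scope.

Definition is_char (G : zmodType) (K : fieldType) (f : G -> K) : Prop :=
  (forall a b, f (a + b) = f a * f b) /\ (forall a, f a != 0).

(* M_j = m_1 + ... + m_j  (the sequence m is indexed from 1). *)
Definition Mpart (m : nat -> nat) (j : nat) : nat := (\sum_(i < j) m i.+1)%N.

(* The product prod_{i=1}^N Z/p^{m_i}; index i : 'I_N stands for i+1. *)
Notation prodZ p m N := {dffun forall i : 'I_N, 'Z_(p ^ m i.+1)}.

Definition digit (p : nat) (m : nat -> nat) (N : nat) (a : prodZ p m N)
  : 'Z_(p ^ Mpart m N) :=
  ((\sum_(i < N) (a i : nat) * p ^ Mpart m i)%N)%:R.

Definition Ffun (p : nat) (m : nat -> nat) (N : nat) (K : fieldType)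
  (psi : 'Z_(p ^ Mpart m N) -> K) (a : prodZ p m N) : K := psi (digit a).

(* <f, chi> = sum_g f(g) * conj(chi)(g), with chi = (chi_1,...,chi_N),
   chi(a) = prod_i chi_i(a_i), conj(chi) = chi^{-1}. *)
Definition fcoef (p : nat) (m : nat -> nat) (N : nat) (K : fieldType)
  (f : prodZ p m N -> K) (chi : forall i : 'I_N, 'Z_(p ^ m i.+1) -> K) : K :=
  \sum_(a : prodZ p m N) f a * \prod_(i < N) (chi i (a i))^-1.

(* A non-archimedean absolute value on K which is p-adic (|p| < 1);
   "same p-adic valuation" is rendered as "same such absolute value". *)
Definition is_padic_abs (p : nat) (K : fieldType) (R : realFieldType)
  (v : K -> R) : Prop :=
  [/\ v 0 = 0, (forall x, x != 0 -> 0 < v x),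
      (forall x y, v (x * y) = v x * v y),
      (forall x y, v (x + y) <= Num.max (v x) (v y)) & v p%:R < 1].

(* Main.v *)
Require Import Defs.
From HB Require Import structures.
From mathcomp Require Import all_boot all_order all_algebra zify.
Import Order.TTheory GRing.Theory Num.Theory.
Local Open Scope ring_scope.
Set Implicit Arguments. Unset Strict Implicit.

Lemma char0 (s : nat) (K : fieldType) (f : 'Z_s -> K) : is_char f -> f 0 = 1.
Proof.
move=> [fD fN]; have := fD 0 0; rewrite addr0 => h.
by apply: (mulfI (fN 0)); rewrite -h mulr1.
Qed.

Lemma charN (s : nat) (K : fieldType) (f : 'Z_s -> K) : is_char f ->
  forall a : nat, f (a%:R) = f 1 ^+ a.
Proof.
move=> fc; elim=> [|a IH]; first by rewrite char0.
by rewrite -addn1 natrD (proj1 fc) IH exprD expr1.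
Qed.

Lemma charZ (s : nat) (K : fieldType) (f : 'Z_s -> K) : is_char f ->
  forall x : 'Z_s, f x = f 1 ^+ x.
Proof. by move=> fc x; rewrite -(charN fc) natr_Zp. Qed.

Lemma charQ (s : nat) (K : fieldType) (f : 'Z_s -> K) : (1 < s)%N -> is_char f ->
  f 1 ^+ s = 1.
Proof. by move=> s1 fc; rewrite -(charN fc) pchar_Zp // char0. Qed.

Lemma sumZp (s : nat) (R : nzRingType) (F : nat -> R) : (1 < s)%N ->
  \sum_(x : 'Z_s) F (x : nat) = \sum_(j < s) F j.
Proof.
move=> s1; transitivity (\sum_(0 <= j < (Zp_trunc s).+2) F j).
  by rewrite big_mkord.
by rewrite Zp_cast // big_mkord.
Qed.

Lemma geom1 (K : fieldType) (r : K) (s : nat) : r != 1 ->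
  \sum_(j < s) r ^+ j = (r ^+ s - 1) / (r - 1).
Proof.
move=> r1; rewrite subrX1 [(r - 1) * _]mulrC mulfK //; by rewrite subr_eq0.
Qed.

Lemma geom0 (K : fieldType) (s : nat) : \sum_(j < s) (1 : K) ^+ j = s%:R.
Proof. by under eq_bigr do rewrite expr1n; rewrite sumr_const card_ord. Qed.

Lemma Mpart_S m i : Mpart m i.+1 = (Mpart m i + m i.+1)%N.
Proof. by rewrite /Mpart big_ord_recr. Qed.

Lemma Mpart_mono m a b : (a <= b)%N -> (Mpart m a <= Mpart m b)%N.
Proof.
move=> /subnKC <-; elim: (b - a)%N => [|d IH]; first by rewrite addn0.
by rewrite addnS Mpart_S (leq_trans IH) // leq_addr.
Qed.

Lemma expr1_dvd (K : fieldType) (x : K) a b : (a %| b)%N -> x ^+ a = 1 -> x ^+ b = 1.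
Proof. by move=> /dvdnP[t ->] h; rewrite mulnC exprM h expr1n. Qed.

Lemma prim_pow (K : fieldType) (p e : nat) (z : K) : prime p ->
  z ^+ (p ^ e.+1) = 1 -> z ^+ (p ^ e) != 1 -> (p ^ e.+1).-primitive_root z.
Proof.
move=> pp h1 h2; have p0 : (0 < p ^ e.+1)%N by rewrite expn_gt0 prime_gt0.
have [d pd dd] := prim_order_exists p0 h1.
move: dd => /(dvdn_pfactor _ _ pp) [f fle df].
have : f = e.+1.
  apply/eqP; rewrite eqn_leq fle /=; rewrite ltnNge; apply/negP => fe.
  move/negP: h2; apply; apply/eqP; apply: (expr1_dvd _ (prim_expr_order pd)).
  by rewrite df dvdn_exp2l.
by move=> ef; rewrite -ef -df.
Qed.

Section V.
Variables (p : nat) (K : fieldType) (R : realFieldType) (v : K -> R).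
Hypothesis hv : is_padic_abs p v.

Lemma v1 : v 1 = 1.
Proof.
case: hv => _ vp vM _ _; have h := vM 1 1; rewrite mulr1 in h.
have v1p : 0 < v 1 by apply: vp; exact: oner_neq0.
by apply: (mulIf (lt0r_neq0 v1p)); rewrite -h mul1r.
Qed.

Lemma vge0 x : 0 <= v x.
Proof.
case: hv => v0 vp _ _ _; have [->|x0] := eqVneq x 0; first by rewrite v0.
exact/ltW/vp.
Qed.

Lemma vroot1 (x : K) N : (0 < N)%N -> x ^+ N = 1 -> v x = 1.
Proof.
case: hv => v0 vp vM _ _ => N0 h.
have x0 : x != 0.
  apply/negP => /eqP x0; move: h; rewrite x0 expr0n.
  by case: N N0 => // N _ /= /eqP; rewrite eq_sym oner_eq0.
have vX : forall j, v (x ^+ j) = v x ^+ j.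
  by elim=> [|j IH]; rewrite ?v1 // exprS vM IH exprS.
have := vX N; rewrite h v1 => /esym e.
have vx := vp _ x0.
by apply/eqP; rewrite -(@pexpr_eq1 _ (v x) N) ?e // ltW.
Qed.

Lemma vsum_le1 (I : Type) (r : seq I) (P : pred I) (F : I -> K) :
  (forall i, P i -> v (F i) <= 1) -> v (\sum_(i <- r | P i) F i) <= 1.
Proof.
case: hv => v0 _ _ vU _ => hF.
apply: (big_ind (fun y => v y <= 1)) => //; first by rewrite v0 ler01.
by move=> x y hx hy; apply: le_trans (vU x y) _; rewrite ge_max hx hy.
Qed.

Lemma vroot (z x : K) N : N.-primitive_root z -> x ^+ N = 1 -> v (x - 1) <= v (z - 1).
Proof.
move=> pz hx; have [j ->] := prim_rootP pz hx.
have N0 := prim_order_gt0 pz; have zN := prim_expr_order pz.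
rewrite subrX1; case: hv => _ _ vM _ _; rewrite vM.
rewrite -{2}(mulr1 (v (z - 1))) ler_wpM2l ?vge0 //.
apply: vsum_le1 => i _; rewrite (vroot1 N0) //.
by rewrite exprAC zN expr1n.
Qed.

Lemma vroot_eq (z x : K) N : N.-primitive_root z -> N.-primitive_root x ->
  v (x - 1) = v (z - 1).
Proof.
move=> pz px; apply/eqP; rewrite eq_le !(vroot pz, vroot px) //; exact: prim_expr_order.
Qed.
End V.

Lemma val1Z s : (1 < s)%N -> nat_of_ord (1 : 'Z_s) = 1%N.
Proof. move=> s1. have := val_Zp_nat s1 1. rewrite modn_small //. Qed.

Lemma sum_dffun_prod (R : comNzRingType) (I : finType) (T_ : I -> finType)
  (F : forall i, T_ i -> R) :
  \sum_(f : {dffun forall i, T_ i}) \prod_i F i (f i) = \prod_i \sum_(x : T_ i) F i x.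
Proof.
pose P_ := fun i => [ffun x : T_ i => F i x].
transitivity (\prod_i \sum_(x : T_ i) P_ i x); last first.
  by apply: eq_bigr => i _; apply: eq_bigr => x _; rewrite ffunE.
under eq_bigr => i _ do rewrite (big_tag (fun i x => P_ i x) i).
rewrite bigA_distr_big_dep -(big_fprod _ _ P_).
rewrite (reindex (@fprod_of_dffun I T_)); last exact/onW_bij/fprod_of_dffun_bij.
apply: eq_bigr => f _; apply: eq_bigr => i _; by rewrite /P_ ffunE fprodE.
Qed.

Unset Implicit Arguments.
Section Main.
Variables (p : nat) (m : nat -> nat) (n k : nat) (K : fieldType)
  (psi : 'Z_(p ^ Mpart m n.+1) -> K).
Hypotheses (pp : prime p) (mpos : forall i, (0 < i)%N -> (0 < m i)%N)
  (hk : (1 <= k <= m n.+1)%N) (pc : is_char psi)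
  (hpsi1 : psi ((p ^ (Mpart m n + k))%N%:R) = 1)
  (hpsi2 : psi ((p ^ (Mpart m n + k).-1)%N%:R) != 1).

Let p1 : (1 < p)%N := prime_gt1 pp.
Lemma qgt1 i : (1 < p ^ m i.+1)%N.
Proof. by rewrite -{1}(expn0 p) ltn_exp2l // mpos. Qed.
Lemma Qgt1 : (1 < p ^ Mpart m n.+1)%N.
Proof. by rewrite -{1}(expn0 p) ltn_exp2l // Mpart_S ltn_addl // mpos. Qed.

Let w := psi 1.
Lemma hw a : psi (a%:R) = w ^+ a.
Proof. exact: charN. Qed.
Lemma w0 : w != 0. Proof. exact: (proj2 pc). Qed.
Lemma wis1 t : (Mpart m n + k <= t)%N -> w ^+ (p ^ t) = 1.
Proof.
move=> ht; apply: (expr1_dvd (dvdn_exp2l _ ht)); by rewrite -hw.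
Qed.
Lemma wnot1 t : (t <= (Mpart m n + k).-1)%N -> w ^+ (p ^ t) != 1.
Proof.
move=> ht; apply: contra hpsi2 => /eqP h; rewrite hw; apply/eqP.
exact: (expr1_dvd (dvdn_exp2l _ ht)).
Qed.

Definition rr (chi : forall i : 'I_n.+1, 'Z_(p ^ m i.+1) -> K) (i : 'I_n.+1) :=
  w ^+ (p ^ Mpart m i) * (chi i 1)^-1.

Lemma key (chi : forall i : 'I_n.+1, 'Z_(p ^ m i.+1) -> K) :
  (forall i, is_char (chi i)) ->
  fcoef (Ffun psi) chi = \prod_(i < n.+1) \sum_(j < p ^ m i.+1) rr chi i ^+ j.
Proof.
move=> cc; rewrite /fcoef /Ffun /digit.
transitivity (\prod_(i < n.+1) \sum_(x : 'Z_(p ^ m i.+1)) rr chi i ^+ x); last first.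
  by apply: eq_bigr => i _; rewrite (sumZp (fun j => rr chi i ^+ j)) // qgt1.
rewrite -(sum_dffun_prod (fun (i : 'I_n.+1) (x : 'Z_(p ^ m i.+1)) => rr chi i ^+ x)).
apply: eq_bigr => a _.
rewrite hw (big_morph (fun t => w ^+ t) (exprD w) (expr0 w)) -big_split /=.
apply: eq_bigr => i _.
by rewrite (charZ (cc i)) /rr -exprVn exprMn -!exprM mulnC.
Qed.

Section Chi.
Variables (chi : forall i : 'I_n.+1, 'Z_(p ^ m i.+1) -> K)
  (cc : forall i : 'I_n.+1, is_char (chi i)).

Lemma c0 i : chi i 1 != 0. Proof. exact: (proj2 (cc i)). Qed.

Lemma rr_pow (i : 'I_n.+1) t : (m i.+1 <= t)%N ->
  rr chi i ^+ (p ^ t) = w ^+ (p ^ (Mpart m i + t)).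
Proof.
move=> ht; rewrite /rr exprMn exprVn.
rewrite (expr1_dvd (dvdn_exp2l p ht) (charQ (qgt1 i) (cc i))) invr1 mulr1.
by rewrite -exprM -expnD.
Qed.

Lemma Sform (i : 'I_n) :
  rr chi (widen_ord (leqnSn n) i) != 1 /\
  \sum_(t < p ^ m i.+1) rr chi (widen_ord (leqnSn n) i) ^+ t =
    (w ^+ (p ^ Mpart m i.+1) - 1) / (rr chi (widen_ord (leqnSn n) i) - 1).
Proof.
have e := rr_pow (widen_ord (leqnSn n) i) _ (leqnn _).
rewrite /= -Mpart_S in e.
have hM := Mpart_mono m (ltn_ord i).
have ne : rr chi (widen_ord (leqnSn n) i) != 1.
  apply: contra (@wnot1 (Mpart m i.+1) _) => [/eqP h|]; last first.
    move: hk hM => /andP[k1 _] hM; lia.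
  by rewrite -e h expr1n.
by split => //; rewrite geom1 // e.
Qed.

Lemma rprim (i : 'I_n) :
  (p ^ ((Mpart m n + k).-1 - Mpart m i).+1).-primitive_root
     (rr chi (widen_ord (leqnSn n) i)).
Proof.
have hM := Mpart_mono m (ltn_ord i).
have hS := Mpart_S m i.
move: hk => /andP[k1 _].
apply: prim_pow => //.
  rewrite rr_pow /=; last by lia.
  apply: wis1; lia.
rewrite rr_pow /=; last by lia.
apply: wnot1; lia.
Qed.

Lemma lastA : rr chi ord_max = 1 ->
  forall a, chi ord_max a = psi ((p ^ Mpart m n * a)%N%:R).
Proof.
move=> h a; rewrite hw (charZ (cc ord_max)) exprM.
congr (_ ^+ _); rewrite -[LHS]mul1r -h /rr mulfVK //; exact: c0.
Qed.

Lemma lastB : (forall a, chi ord_max a = psi ((p ^ Mpart m n * a)%N%:R)) ->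
  rr chi ord_max = 1.
Proof.
move=> h; have := h 1; rewrite val1Z ?qgt1 // muln1 hw /rr => ->.
by rewrite divff // expf_neq0 // w0.
Qed.

Lemma lastS0 : rr chi ord_max != 1 ->
  \sum_(t < p ^ m n.+1) rr chi ord_max ^+ t = 0.
Proof.
move=> ne; rewrite geom1 // rr_pow //= -Mpart_S wis1 ?subrr ?mul0r //.
move: hk => /andP[_ kk]; rewrite Mpart_S leq_add2l //.
Qed.

Lemma lastS1 : rr chi ord_max = 1 ->
  \sum_(t < p ^ m n.+1) rr chi ord_max ^+ t = (p ^ m n.+1)%N%:R.
Proof. by move=> ->; rewrite geom0. Qed.
End Chi.

Definition SS chi (i : 'I_n) :=
  \sum_(t < p ^ m i.+1) rr chi (widen_ord (leqnSn n) i) ^+ t.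

Lemma nzform chi (cc : forall i : 'I_n.+1, is_char (chi i)) :
  fcoef (Ffun psi) chi != 0 ->
  fcoef (Ffun psi) chi = (\prod_(i < n) SS chi i) * (p ^ m n.+1)%N%:R.
Proof.
rewrite key // big_ord_recr /=; case: (eqVneq (rr chi ord_max) 1) => h.
  by rewrite lastS1.
by rewrite lastS0 // mulr0 eqxx.
Qed.

Lemma SSv (R : realFieldType) (v : K -> R) (hv : is_padic_abs p v) chi chi'
  (cc : forall i : 'I_n.+1, is_char (chi i)) (cc' : forall i : 'I_n.+1, is_char (chi' i))
  (i : 'I_n) : v (SS chi i) = v (SS chi' i).
Proof.
have [ne e] := Sform chi cc i; have [ne' e'] := Sform chi' cc' i.
have d := vroot_eq hv (rprim chi cc i) (rprim chi' cc' i).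
have [v0 vp vM _ _] := hv.
have dp : 0 < v (rr chi (widen_ord (leqnSn n) i) - 1) by apply: vp; rewrite subr_eq0.
apply: (mulIf (lt0r_neq0 dp)); rewrite -vM -d -vM /SS e e' !mulfVK ?subr_eq0 //.
Qed.

Lemma main_part :
  (forall chi : forall i : 'I_n.+1, 'Z_(p ^ m i.+1) -> K,
     (forall i, is_char (chi i)) ->
     ((~ (forall a : 'Z_(p ^ m n.+1),
            chi ord_max a = psi ((p ^ Mpart m n * a)%N%:R))) ->
        fcoef (Ffun psi) chi = 0) /\
     ((forall a : 'Z_(p ^ m n.+1),
            chi ord_max a = psi ((p ^ Mpart m n * a)%N%:R)) ->
        fcoef (Ffun psi) chi =
          (p ^ m n.+1)%N%:R *
          \prod_(i < n)
             ((psi ((p ^ Mpart m i.+1)%N%:R) - 1) /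
              (psi ((p ^ Mpart m i)%N%:R) * (chi (widen_ord (leqnSn n) i) 1)^-1 - 1))))
  /\
  (forall (R : realFieldType) (v : K -> R), is_padic_abs p v ->
     forall chi chi' : forall i : 'I_n.+1, 'Z_(p ^ m i.+1) -> K,
       (forall i, is_char (chi i)) -> (forall i, is_char (chi' i)) ->
       fcoef (Ffun psi) chi != 0 -> fcoef (Ffun psi) chi' != 0 ->
       v (fcoef (Ffun psi) chi) = v (fcoef (Ffun psi) chi')).
Proof.
split.
  move=> chi cc; rewrite key // big_ord_recr /=; split.
    move=> hn; rewrite lastS0 ?mulr0 //; apply/negP => /eqP h; apply: hn.
    exact: lastA.
  move=> hc; rewrite lastS1; last exact: lastB.
  rewrite mulrC; congr (_ * _).
  apply: eq_bigr => i _; have [_ ->] := Sform chi cc i.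
  by rewrite !hw.
move=> R v hv chi chi' cc cc' nz nz'.
rewrite (nzform chi cc nz) (nzform chi' cc' nz').
have [v0 vp vM _ _] := hv.
rewrite !vM; congr (_ * _).
rewrite !(big_morph v vM (v1 hv)); apply: eq_bigr => i _; exact: SSv.
Qed.
End Main.

Theorem lemma3p2 (p : nat) (m : nat -> nat) (n k : nat) (K : fieldType)
  (psi : 'Z_(p ^ Mpart m n.+1) -> K) :
  prime p ->
  (forall i, 0 < i -> 0 < m i)%N ->
  (1 <= k <= m n.+1)%N ->
  is_char psi ->
  psi ((p ^ (Mpart m n + k))%N%:R) = 1 ->
  psi ((p ^ (Mpart m n + k).-1)%N%:R) != 1 ->
  (forall chi : forall i : 'I_n.+1, 'Z_(p ^ m i.+1) -> K,
     (forall i, is_char (chi i)) ->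
     ((~ (forall a : 'Z_(p ^ m n.+1),
            chi ord_max a = psi ((p ^ Mpart m n * a)%N%:R))) ->
        fcoef (Ffun psi) chi = 0) /\
     ((forall a : 'Z_(p ^ m n.+1),
            chi ord_max a = psi ((p ^ Mpart m n * a)%N%:R)) ->
        fcoef (Ffun psi) chi =
          (p ^ m n.+1)%N%:R *
          \prod_(i < n)
             ((psi ((p ^ Mpart m i.+1)%N%:R) - 1) /
              (psi ((p ^ Mpart m i)%N%:R) * (chi (widen_ord (leqnSn n) i) 1)^-1 - 1))))
  /\
  (forall (R : realFieldType) (v : K -> R), is_padic_abs p v ->
     forall chi chi' : forall i : 'I_n.+1, 'Z_(p ^ m i.+1) -> K,
       (forall i, is_char (chi i)) -> (forall i, is_char (chi' i)) ->
       fcoef (Ffun psi) chi != 0 -> fcoef (Ffun psi) chi' != 0 ->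
       v (fcoef (Ffun psi) chi) = v (fcoef (Ffun psi) chi')).
Proof.
move=> pp mp hk pc h1 h2; exact: (@main_part p m n k K psi pp mp hk pc h1 h2).
Qed.
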